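(* Let $n,d$ be positive integers with $d$ dividing $n$, let $C_n=\langle a\mid a^n=e\rangle$, let $l$ be an integer, and let $\Delta=\{a^{jn/d+l}: j=0,\dots,d-1\}$. For complex numbers $W_0,\dots,W_{d-1}$, the operator $W=\sum_{j=0}^{d-1}W_jU_{a^{jn/d+l}}$ on $\ell^2(C_n)$ is unitary if and only if there exist real numbers $\theta_0,\dots,\theta_{d-1}$ such that $W_j=\frac1d\sum_{k=0}^{d-1}e^{i\theta_k}e^{2\pi i kj/d}$ for all $j=0,\dots,d-1$.
   Context: For a group $\Gamma$, let $\ell^2(\Gamma)$ have orthonormal basis $\{|g\rangle\}_{g\in\Gamma}$ and for $\delta\in\Gamma$ let $U_\delta$ be the unitary with $U_\delta|g\rangle=|g\delta\rangle$. Such a unitary $W$ with all $W_j$ nonzero is a homogeneous scalar quantum walk on the Cayley graph $C_\Delta(C_n)$ (vertex set $C_n$, directed edges $(g,g\delta)$ for $\delta\in\Delta$). *)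

(* Defs.v *)
From HB Require Import structures.
From mathcomp Require Import all_boot all_order all_algebra.
From mathcomp Require Import complex.
From mathcomp Require Import reals trigo.
Set Implicit Arguments. Unset Strict Implicit. Unset Printing Implicit Defensive.
Import Order.TTheory GRing.Theory Num.Theory.
Local Open Scope ring_scope.

(* The cyclic group C_n = <a | a^n = e> is identified with 'I_n, a^k <-> k mod n.
   The basis vector |g> of l^2(C_n) is the g-th standard basis column vector, so an
   operator is an n x n complex matrix A with A h g = <h| A |g>. *)

(* U_{a^m} |g> = |g a^m> = |(g + m) mod n>, for m : int. *)
Definition shiftU (R : realType) (n : nat) (m : int) : 'M[R[i]]_n :=
  \matrix_(h < n, g < n) ((h%:Z == ((g%:Z + m) %% n%:Z)%Z)%:R).

Definition adjmx (R : realType) (n : nat) (A : 'M[R[i]]_n) : 'M[R[i]]_n :=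
  (map_mx Num.conj A)^T.

Definition unitary_mx (R : realType) (n : nat) (A : 'M[R[i]]_n) : Prop :=
  A *m adjmx A = 1%:M /\ adjmx A *m A = 1%:M.

Definition cexpi (R : realType) (theta : R) : R[i] := (cos theta +i* sin theta)%C.

(* Main.v *)
Set Warnings "-notation-overridden,-ambiguous-paths".
Require Import Defs.
From HB Require Import structures.
From mathcomp Require Import all_boot all_order all_algebra.
From mathcomp Require Import complex.
From mathcomp Require Import reals trigo.
From mathcomp Require Import ring.
Import Order.TTheory GRing.Theory Num.Theory.
Local Open Scope ring_scope.
Section Shift.
Variable R : realType.
Variable N : nat.
Local Notation n := N.+1.
Local Notation U := (shiftU R n).

Definition oz (z : int) : 'I_n := inord (absz (z %% n)%Z).

Lemma oz_val z : (oz z : nat)%:Z = (z %% n)%Z.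
Proof.
rewrite /oz inordK ?gez0_abs ?modz_ge0 //.
have := ltz_mod z (isT : (n%:Z != 0)).
by rewrite -ltz_nat gez0_abs ?modz_ge0.
Qed.

Lemma oz_eq z1 z2 : (z1 %% n)%Z = (z2 %% n)%Z -> oz z1 = oz z2.
Proof. by move=> H; apply: val_inj; apply/eqP; rewrite -eqz_nat !oz_val H. Qed.

Lemma ozDl x a : oz ((oz x : nat)%:Z + a) = oz (x + a).
Proof. by apply: oz_eq; rewrite oz_val modzDml. Qed.

Lemma oz_ord (g : 'I_n) : oz (g : nat)%:Z = g.
Proof.
apply: val_inj; apply/eqP; rewrite -eqz_nat oz_val modz_small //.
by rewrite lez_nat ltz_nat ltn_ord.
Qed.

Lemma U_E a (h g : 'I_n) : U a h g = (h == oz ((g : nat)%:Z + a))%:R.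
Proof.
rewrite mxE; congr ((nat_of_bool _)%:R); apply/idP/idP => /eqP H.
  by apply/eqP; apply: val_inj; apply/eqP; rewrite -eqz_nat oz_val H.
by rewrite H oz_val.
Qed.

Lemma mulU a b : U a *m U b = U (a + b).
Proof.
apply/matrixP => h g; rewrite U_E mxE (bigD1 (oz ((g : nat)%:Z + b))) //= big1.
  by rewrite !U_E eqxx mulr1 addr0 ozDl -addrA [a + b]addrC.
by move=> k /negbTE nk; rewrite !U_E nk mulr0.
Qed.

Lemma U0 : U 0 = 1%:M.
Proof.
apply/matrixP => h g; rewrite U_E addr0 oz_ord mxE.
by case: (h == g).
Qed.

Lemma U_mod a b : (a %% n)%Z = (b %% n)%Z -> U a = U b.
Proof.
move=> H; apply/matrixP => h g; rewrite !U_E; congr ((nat_of_bool _)%:R); congr (_ == _).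
by apply: oz_eq; rewrite -modzDmr H modzDmr.
Qed.

Lemma adjU a : adjmx (U a) = U (- a).
Proof.
apply/matrixP => h g; rewrite U_E /adjmx !mxE.
have := U_E a g h; rewrite mxE => ->; rewrite rmorph_nat.
congr ((nat_of_bool _)%:R); apply/eqP/eqP => [->|->].
  by rewrite ozDl -addrA subrr addr0 oz_ord.
by rewrite ozDl -addrA addNr addr0 oz_ord.
Qed.

End Shift.

Section Adj.
Variable R : realType.
Variable n : nat.
Implicit Types A B : 'M[R[i]]_n.

Lemma adjM A B : adjmx (A *m B) = adjmx B *m adjmx A.
Proof. by rewrite /adjmx map_mxM trmx_mul. Qed.

Lemma adjK A : adjmx (adjmx A) = A.
Proof. by apply/matrixP => i j; rewrite /adjmx !mxE conjCK. Qed.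

Lemma adjZ c A : adjmx (c *: A) = Num.conj c *: adjmx A.
Proof. by apply/matrixP => i j; rewrite /adjmx !mxE rmorphM. Qed.

Lemma adj_sum (I : finType) (F : I -> 'M[R[i]]_n) :
  adjmx (\sum_i F i) = \sum_i adjmx (F i).
Proof.
apply/matrixP => i j; rewrite /adjmx !mxE !summxE rmorph_sum.
by apply: eq_bigr => k _; rewrite !mxE.
Qed.

Lemma adj1 : adjmx (1%:M : 'M[R[i]]_n) = 1%:M.
Proof. by rewrite /adjmx map_mx1 trmx1. Qed.

End Adj.
Section Trig.
Variable R : realType.
Local Notation C := (R[i]).

Lemma cexpiD (x y : R) : cexpi (x + y) = cexpi x * cexpi y.
Proof.
rewrite /cexpi cosD sinD; apply/eqP; rewrite eq_complex /=.
by rewrite eqxx /= addrC.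
Qed.

Lemma cexpi0 : cexpi (0 : R) = 1.
Proof. by rewrite /cexpi cos0 sin0. Qed.

Lemma cexpi_nat (k : nat) (x : R) : cexpi (k%:R * x) = cexpi x ^+ k.
Proof.
elim: k => [|k IH]; first by rewrite mul0r cexpi0 expr0.
by rewrite exprS -IH -cexpiD -natr1 mulrDl mul1r addrC.
Qed.

Lemma cexpiJ (x : R) : cexpi x * Num.conj (cexpi x) = 1.
Proof.
rewrite /cexpi; apply/eqP; rewrite eq_complex /=.
rewrite mulrN opprK -!expr2 cos2Dsin2 eqxx /=.
by rewrite mulrN [sin x * _]mulrC addNr.
Qed.

Definition carg (z : C) : R :=
  let: (a +i* b)%C := z in if 0 <= b then acos a else - acos a.

Lemma cargK (z : C) : z * Num.conj z = 1 -> cexpi (carg z) = z.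
Proof.
case: z => a b /eqP; rewrite eq_complex /= => /andP[/eqP H1 _].
have Hab : a ^+ 2 + b ^+ 2 = 1 by rewrite !expr2 -H1 mulrN opprK.
have Ha : -1 <= a <= 1.
  rewrite -ler_norml -(@ler_pXn2r _ 2) ?nnegrE ?normr_ge0 // expr1n real_normK ?num_real //.
  by rewrite -Hab lerDl sqr_ge0.
have Hs : Num.sqrt (1 - a ^+ 2) = `|b|.
  by rewrite -Hab addrC addKr sqrtr_sqr.
rewrite /carg /cexpi /=.
case: ifP => Hb.
  by rewrite acosK ?in_itv //= sin_acos // Hs ger0_norm.
rewrite cosN sinN acosK ?in_itv //= sin_acos // Hs ltr0_norm ?opprK //.
by rewrite ltNge Hb.
Qed.

End Trig.
Section Root.
Variable R : realType.
Variable D : nat.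
Local Notation d := D.+1.
Local Notation C := (R[i]).
Definition w : C := cexpi (2 * pi / d%:R : R).

Lemma w_d : w ^+ d = 1.
Proof.
rewrite /w -cexpi_nat mulrCA mulfV ?pnatr_eq0 // mulr1 /cexpi.
by rewrite mulr_natl cos2pi sin2pi.
Qed.

Lemma w_neq0 : w != 0.
Proof. by apply/eqP => H; have := w_d; rewrite H expr0n /= => /eqP; rewrite eq_sym oner_eq0. Qed.

Lemma w_neq1 (t : nat) : (0 < t)%N -> (t < d)%N -> w ^+ t != 1.
Proof.
move=> t0 td; apply/eqP; rewrite /w -cexpi_nat.
set y : R := t%:R * pi / d%:R.
have -> : t%:R * (2 * pi / d%:R) = y + y :> R.
  by rewrite /y; ring.
rewrite /cexpi => /eqP; rewrite eq_complex /= => /andP[/eqP H _].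
have Hy : 0 < y < pi.
  have dp : (0 : R) < d%:R by rewrite ltr0n.
  apply/andP; split.
    by rewrite /y divr_gt0 // mulr_gt0 ?pi_gt0 ?ltr0n.
  rewrite /y ltr_pdivrMr // mulrC ltr_pM2l ?pi_gt0 //.
  by rewrite ltr_nat.
have := sin_gt0_pi Hy; rewrite lt0r => /andP[/eqP sn _].
apply: sn; move: H; rewrite cosD.
have := cos2Dsin2 y; rewrite !expr2 => E.
have -> : cos y * cos y = 1 - sin y * sin y by rewrite -E addrK.
move=> /eqP; rewrite -addrA -opprD addrC -subr_eq0 addrK oppr_eq0.
rewrite -mulr2n mulrn_eq0 /= mulf_eq0 orbb.
by move/eqP.
Qed.

Lemma w_inj (k k' : nat) : (k < d)%N -> (k' < d)%N -> w ^+ k = w ^+ k' -> k = k'.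
Proof.
wlog le : k k' / (k <= k')%N.
  move=> H kd k'd E; case: (leqP k k') => [kk|kk]; first exact: H.
  by apply/esym/H => //; apply: ltnW.
move=> kd k'd E; apply/eqP; rewrite eqn_leq le /=.
rewrite -subn_eq0; apply: contraTT isT => nz.
have : w ^+ (k' - k) != 1 by apply: w_neq1; [rewrite lt0n | apply: leq_ltn_trans (leq_subr _ _) k'd].
move/eqP => H; exfalso; apply: H.
have E2 : w ^+ k' = w ^+ k * w ^+ (k' - k) by rewrite -exprD subnKC.
rewrite E2 in E.
have wk : w ^+ k != 0 by rewrite expf_neq0 // w_neq0.
by apply: (mulfI wk); rewrite mulr1.
Qed.

Lemma geo (z : C) : z ^+ d = 1 -> z != 1 -> \sum_(j < d) z ^+ j = 0.
Proof.
move=> zd z1; have := subrX1 z d; rewrite zd subrr => /esym/eqP.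
by rewrite mulf_eq0 subr_eq0 (negbTE z1) /= => /eqP.
Qed.

Lemma sum_const1 : \sum_(j < d) (1 : C) = d%:R.
Proof. by rewrite sumr_const card_ord. Qed.

Lemma sum_w (t : nat) : (t < d)%N ->
  \sum_(j < d) (w ^+ t) ^+ j = if t == 0%N then d%:R else 0.
Proof.
move=> td; case: eqP => [->|/eqP t0].
  by rewrite expr0; under eq_bigr do rewrite expr1n; exact: sum_const1.
apply: geo; first by rewrite -exprM mulnC exprM w_d expr1n.
by apply: w_neq1; rewrite // lt0n.
Qed.

Lemma conj_w : Num.conj w = w^-1.
Proof.
by rewrite -[Num.conj w]mul1r -(mulVf w_neq0) -mulrA cexpiJ mulr1.
Qed.

Lemma sum_wkk (k k' : 'I_d) :
  \sum_(j < d) (w ^+ k' * (Num.conj w) ^+ k) ^+ j = if k == k' then d%:R else 0.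
Proof.
rewrite conj_w exprVn.
have wk : w ^+ k != 0 by rewrite expf_neq0 // w_neq0.
case: eqP => [->|/eqP kk].
  by rewrite mulfV ?expf_neq0 ?w_neq0 //; under eq_bigr do rewrite expr1n; exact: sum_const1.
apply: geo.
  by rewrite exprMn exprVn -!exprM !(mulnC _ d) !exprM w_d !expr1n invr1 mulr1.
apply/eqP => E; move/eqP: kk; apply.
apply: val_inj; apply: w_inj; rewrite ?ltn_ord //.
move/(congr1 (fun x => x * w ^+ k)): E; rewrite mul1r -mulrA mulVf // mulr1.
by move=> <-.
Qed.

End Root.
Section Proj.
Variable R : realType.
Variables N D m : nat.
Hypothesis HM : (D.+1 * m)%N = N.+1.
Local Notation n := N.+1.
Local Notation d := D.+1.
Local Notation C := (R[i]).
Local Notation U := (shiftU R n).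
Local Notation w := (w R D).
Local Notation oz := (oz N).

Lemma m_gt0 : (0 < m)%N.
Proof. by move: HM; case: m => //; rewrite muln0. Qed.

Lemma jm_lt (j : 'I_d) : (j * m < n)%N.
Proof. by rewrite -HM ltn_pmul2r ?m_gt0. Qed.

Lemma oz_nat x : (x < n)%N -> (oz x%:Z : nat) = x.
Proof. by move=> xn; have := congr1 val (oz_ord N (Ordinal xn)). Qed.

Lemma ozjm (j j0 : 'I_d) : (oz (j0 * m)%N%:Z == oz (0 + (j * m)%N%:Z)) = (j0 == j).
Proof.
by rewrite add0r -val_eqE /= !oz_nat ?jm_lt // eqn_pmul2r ?m_gt0.
Qed.

Lemma extract (f : 'I_d -> C) (j0 : 'I_d) :
  (\sum_(j < d) f j *: U (j * m)%N%:Z) (oz (j0 * m)%N%:Z) ord0 = f j0.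
Proof.
rewrite summxE (bigD1 j0) //= big1 ?addr0.
  by rewrite mxE U_E ozjm eqxx mulr1.
by move=> j nj; rewrite mxE U_E ozjm eq_sym (negbTE nj) mulr0.
Qed.

Lemma extract_inj (f g : 'I_d -> C) :
  \sum_(j < d) f j *: U (j * m)%N%:Z = \sum_(j < d) g j *: U (j * m)%N%:Z ->
  forall j, f j = g j.
Proof. by move=> E j; rewrite -extract E extract. Qed.

Lemma Un : U (d * m)%N%:Z = U 0.
Proof. by apply: U_mod; rewrite HM modzz mod0z. Qed.

Lemma shift_sum (F : nat -> 'M[C]_n) : F d = F 0%N ->
  \sum_(j < d) F j.+1 = \sum_(j < d) F j.
Proof.
move=> H.
have E1 := @big_ord_recl _ 0 +%R d (fun i : 'I_d.+1 => F i).
have E2 := @big_ord_recr _ 0 +%R d (fun i : 'I_d.+1 => F i).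
simpl in E1, E2; rewrite E1 H addrC in E2.
move/addrI: E2 => <-; apply: eq_bigr => i _; by rewrite /bump leq0n.
Qed.

Definition Q (k : 'I_d) : 'M[C]_n :=
  \sum_(j < d) (d%:R^-1 * w ^+ (j * k)) *: U (j * m)%N%:Z.

Lemma UQ (k : 'I_d) : w ^+ k *: (U m%:Z *m Q k) = Q k.
Proof.
rewrite /Q mulmx_sumr scaler_sumr.
pose G (j : nat) := (d%:R^-1 * w ^+ (j * k)) *: U (j * m)%N%:Z.
rewrite (eq_bigr (fun j : 'I_d => G j.+1)); last first.
  move=> j _; rewrite /G -scalemxAr scalerA mulU mulrCA -exprD.
  by rewrite -PoszD -mulSn mulnC -mulSn mulnC.
by rewrite shift_sum // /G Un !mul0n expr0 exprM w_d expr1n.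
Qed.


Lemma UjQ (j : nat) (k : 'I_d) : w ^+ (j * k) *: (U (j * m)%N%:Z *m Q k) = Q k.
Proof.
elim: j => [|j IH]; first by rewrite !mul0n expr0 scale1r U0 mul1mx.
rewrite !mulSnr PoszD -mulU exprD -scalerA -mulmxA scalemxAr UQ.
by rewrite IH.
Qed.

Lemma UjQ' (j : nat) (k : 'I_d) : U (j * m)%N%:Z *m Q k = (w ^+ (j * k))^-1 *: Q k.
Proof.
have wn : w ^+ (j * k) != 0 by rewrite expf_neq0 // w_neq0.
by rewrite -{2}(UjQ j k) scalerA mulVf // scale1r.
Qed.

Lemma adjQU (j : nat) (k : 'I_d) :
  adjmx (Q k) *m U (j * m)%N%:Z = Num.conj (w ^+ (j * k)) *: adjmx (Q k).
Proof.
rewrite -{1}(UjQ j k) adjZ adjM adjU -scalemxAl -mulmxA mulU addNr U0 mulmx1.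
by [].
Qed.

Lemma adjQQ (k k' : 'I_d) :
  adjmx (Q k) *m Q k' = if k == k' then adjmx (Q k) else 0.
Proof.
rewrite {2}/Q mulmx_sumr.
rewrite (eq_bigr (fun j : 'I_d => (d%:R^-1 * (w ^+ k' * (Num.conj w) ^+ k) ^+ j) *: adjmx (Q k))); last first.
  move=> j _; rewrite -scalemxAr adjQU scalerA rmorphXn exprMn -!exprM.
  by rewrite -mulrA (mulnC k' j) (mulnC k j).
rewrite -scaler_suml -mulr_sumr sum_wkk.
case: eqP => _; last by rewrite mulr0 scale0r.
by rewrite mulVf ?pnatr_eq0 // scale1r.
Qed.

Lemma sumQ : \sum_(k < d) Q k = 1%:M.
Proof.
rewrite /Q exchange_big /=.
rewrite (eq_bigr (fun j : 'I_d => (if (j : nat) == 0%N then 1 else 0) *: U (j * m)%N%:Z)); last first.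
  move=> j _; rewrite -scaler_suml -mulr_sumr.
  under eq_bigr do rewrite exprM.
  rewrite sum_w ?ltn_ord //.
  by case: eqP => _; rewrite ?mulr0 // mulVf ?pnatr_eq0.
rewrite (bigD1 ord0) //= big1 ?addr0.
  by rewrite scale1r mul0n U0.
by move=> j; rewrite -val_eqE /= => /negbTE ->; rewrite scale0r.
Qed.

Lemma sum_if (k : 'I_d) (c : 'I_d -> C) (X : 'M[C]_n) :
  \sum_(k' < d) c k' *: (if k == k' then X else 0) = c k *: X.
Proof.
rewrite (bigD1 k) //= eqxx big1 ?addr0 // => k' nk.
by rewrite eq_sym (negbTE nk) scaler0.
Qed.

Lemma sum_if' (k : 'I_d) (c : 'I_d -> C) (X : 'I_d -> 'M[C]_n) :
  \sum_(k' < d) c k' *: (if k' == k then X k' else 0) = c k *: X k.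
Proof.
rewrite (bigD1 k) //= eqxx big1 ?addr0 // => k' nk.
by rewrite (negbTE nk) scaler0.
Qed.

Lemma adjQ (k : 'I_d) : adjmx (Q k) = Q k.
Proof.
have E1 : adjmx (Q k) = adjmx (Q k) *m Q k.
  rewrite -{1}[adjmx (Q k)]mulmx1 -sumQ mulmx_sumr.
  under eq_bigr do rewrite adjQQ -[if _ then _ else _]scale1r.
  by rewrite (sum_if k (fun _ => 1)) scale1r adjQQ eqxx.
have E2 : Q k = adjmx (Q k) *m Q k.
  rewrite -{1}[Q k]mul1mx -(adj1 R n) -sumQ adj_sum mulmx_suml.
  under eq_bigr do rewrite adjQQ -[if _ then _ else _]scale1r.
  by rewrite (sum_if' k (fun _ => 1) (fun k => adjmx (Q k))) scale1r adjQQ eqxx.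
by rewrite E1 -E2.
Qed.

Lemma QQ (k k' : 'I_d) : Q k *m Q k' = if k == k' then Q k else 0.
Proof. by rewrite -{1}adjQ adjQQ adjQ. Qed.

Lemma Q00 (k : 'I_d) : Q k (oz (0 * m)%N%:Z) ord0 = d%:R^-1.
Proof. by rewrite (extract _ ord0) mul0n expr0 mulr1. Qed.


Lemma bilin (a b : 'I_d -> C) (X Y : 'I_d -> 'M[C]_n) :
  (\sum_(k < d) a k *: X k) *m (\sum_(k < d) b k *: Y k) =
  \sum_(k < d) \sum_(k' < d) (a k * b k') *: (X k *m Y k').
Proof.
rewrite mulmx_suml; apply: eq_bigr => k _.
rewrite -scalemxAl mulmx_sumr scaler_sumr; apply: eq_bigr => k' _.
by rewrite -scalemxAr scalerA.
Qed.

Lemma adj_lin (a : 'I_d -> C) (X : 'I_d -> 'M[C]_n) :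
  adjmx (\sum_(k < d) a k *: X k) = \sum_(k < d) Num.conj (a k) *: adjmx (X k).
Proof. by rewrite adj_sum; apply: eq_bigr => k _; rewrite adjZ. Qed.

Lemma unit_from_e (e : 'I_d -> C) : (forall k, Num.conj (e k) * e k = 1) ->
  let A := \sum_(k < d) e k *: Q k in
  adjmx A *m A = 1%:M /\ A *m adjmx A = 1%:M.
Proof.
move=> He A; split.
  rewrite /A adj_lin bilin.
  under eq_bigr => k _ do (under eq_bigr => k' _ do rewrite adjQQ;
     rewrite (sum_if k (fun k' => Num.conj (e k) * e k'))).
  by under eq_bigr => k _ do rewrite He scale1r adjQ; rewrite sumQ.
rewrite /A adj_lin bilin.
under eq_bigr => k _ do (under eq_bigr => k' _ do rewrite adjQ QQ;
   rewrite (sum_if k (fun k' => e k * Num.conj (e k')))).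
by under eq_bigr => k _ do rewrite mulrC He scale1r; rewrite sumQ.
Qed.

Definition lam (W : 'I_d -> C) (k : 'I_d) : C :=
  \sum_(j < d) W j * (w ^+ (j * k))^-1.

Definition Aop (W : 'I_d -> C) : 'M[C]_n := \sum_(j < d) W j *: U (j * m)%N%:Z.

Lemma AQ W (k : 'I_d) : Aop W *m Q k = lam W k *: Q k.
Proof.
rewrite /Aop mulmx_suml /lam scaler_suml; apply: eq_bigr => j _.
by rewrite -scalemxAl UjQ' scalerA.
Qed.

Lemma lam_unit W : adjmx (Aop W) *m Aop W = 1%:M ->
  forall k, Num.conj (lam W k) * lam W k = 1.
Proof.
move=> H k.
have E : Q k = (Num.conj (lam W k) * lam W k) *: Q k.
  transitivity (adjmx (Q k) *m (adjmx (Aop W) *m Aop W) *m Q k).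
    by rewrite H mulmx1 adjQQ eqxx adjQ.
  rewrite mulmxA -adjM -mulmxA AQ adjZ -scalemxAl -scalemxAr scalerA.
  by rewrite adjQQ eqxx adjQ.
have := congr1 (fun M : 'M[C]_n => M (oz (0 * m)%N%:Z) ord0) E.
rewrite /= mxE Q00 => E2.
have dn : (d%:R^-1 : C) != 0 by rewrite invr_eq0 pnatr_eq0.
by apply: (mulIf dn); rewrite mul1r -E2.
Qed.

Lemma A_expand W : Aop W = \sum_(k < d) lam W k *: Q k.
Proof.
by rewrite -[Aop W]mulmx1 -sumQ mulmx_sumr; apply: eq_bigr => k _; rewrite AQ.
Qed.

Lemma lin_Q (e : 'I_d -> C) :
  \sum_(k < d) e k *: Q k =
  \sum_(j < d) (\sum_(k < d) e k * (d%:R^-1 * w ^+ (j * k))) *: U (j * m)%N%:Z.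
Proof.
rewrite /Q; under eq_bigr do rewrite scaler_sumr.
rewrite exchange_big /=; apply: eq_bigr => j _.
by rewrite scaler_suml; apply: eq_bigr => k _; rewrite scalerA.
Qed.

End Proj.

Theorem mainTheorem10 (R : realType) (n d : nat) (hn : (0 < n)%N) (hd : (0 < d)%N)
    (hdn : (d %| n)%N) (l : int) (W : 'I_d -> R[i]) :
  unitary_mx (\sum_(j < d) W j *: shiftU R n ((j * (n %/ d))%N%:Z + l))
  <->
  exists theta : 'I_d -> R, forall j : 'I_d,
    W j = d%:R^-1 * \sum_(k < d)
            cexpi (theta k) * cexpi (2 * pi * k%:R * j%:R / d%:R).
Proof.
move: hn hd hdn W; case: n => [//|N] _; case: d => [//|D] _ hdn W.
set m := (N.+1 %/ D.+1)%N.
have HM : (D.+1 * m)%N = N.+1 by rewrite mulnC divnK.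
have Mdef : \sum_(j < D.+1) W j *: shiftU R N.+1 ((j * m)%N%:Z + l) =
    shiftU R N.+1 l *m Aop R N D m W.
  by rewrite /Aop mulmx_sumr; apply: eq_bigr => j _; rewrite -scalemxAr mulU addrC.
rewrite Mdef.
have Hw : forall k j : 'I_D.+1,
    cexpi (2 * pi * (k : nat)%:R * (j : nat)%:R / D.+1%:R) = w R D ^+ (k * j).
  move=> k j; rewrite /w -cexpi_nat natrM; congr cexpi.
  ring.
split.
  case=> _ H2.
  have HA : adjmx (Aop R N D m W) *m Aop R N D m W = 1%:M.
    by rewrite adjM adjU -mulmxA (mulmxA (shiftU R N.+1 (- l))) mulU addNr U0 mul1mx in H2.
  exists (fun k => carg R (lam R D W k)) => j.
  have E := A_expand R N D m HM W; rewrite /Aop lin_Q in E.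
  rewrite (extract_inj R N D m HM _ _ E j) mulr_sumr; apply: eq_bigr => k _.
  rewrite cargK; last by rewrite mulrC (lam_unit R N D m HM W HA).
  by rewrite Hw mulrCA mulnC.
case=> theta Ht.
pose e := fun k => cexpi (theta k).
have HA : Aop R N D m W = \sum_(k < D.+1) e k *: Q R N D m k.
  rewrite lin_Q /Aop; apply: eq_bigr => j _; congr (_ *: _).
  rewrite Ht mulr_sumr; apply: eq_bigr => k _.
  by rewrite Hw mulnC mulrCA.
have [H1 H2] := unit_from_e R N D m HM e (fun k => ltac:(by rewrite mulrC cexpiJ)).
rewrite /= -HA in H1 H2.
split.
  by rewrite adjM adjU mulmxA -(mulmxA (shiftU R N.+1 l)) H2 mulmx1 mulU subrr U0.
by rewrite adjM adjU -mulmxA (mulmxA (shiftU R N.+1 (- l))) mulU addNr U0 mul1mx.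
Qed.
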